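(* Let $A$ be a Boolean algebra and $B$ a Boolean $\sigma$-algebra. Then every Boolean algebra homomorphism $\phi\colon A\to B$ extends uniquely, along the natural inclusion $A\hookrightarrow A^\infty$, to a $\sigma$-homomorphism $\Phi\colon A^\infty\to B$.
   Context: A Boolean $\sigma$-algebra is a Boolean algebra with all countable suprema and infima; a $\sigma$-homomorphism between Boolean $\sigma$-algebras is a Boolean homomorphism preserving countable suprema. For a compact Hausdorff space $X$, the Baire $\sigma$-algebra $\mathsf{Baire}(X)$ is the smallest $\sigma$-algebra on $X$ making all continuous functions $X\to\mathbb{R}$ measurable. The Baire envelope of a Boolean algebra $A$ is $A^\infty:=\mathsf{Baire}(\mathrm{Stone}(A))$, where $\mathrm{Stone}(A)$ is the Stone space; the natural inclusion $A\hookrightarrow A^\infty$ identifies each element of $A$ with the corresponding clopen subset of $\mathrm{Stone}(A)$. *)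

(* Defs.v *)
From HB Require Import structures.
From mathcomp Require Import all_boot all_order all_algebra.
From mathcomp Require Import all_classical all_reals all_analysis.
From mathcomp Require Import Rstruct Rstruct_topology.
From Stdlib Require Import Reals.

Set Implicit Arguments.
Unset Strict Implicit.
Unset Printing Implicit Defensive.

Import Order.TTheory.
Local Open Scope classical_set_scope.

(** Boolean algebras are MathComp's complemented distributive lattices
    with top and bottom: [ctbDistrLatticeType d]. *)

Section BoolAlg.
Context {dA dB : Order.disp_t}
        {A : ctbDistrLatticeType dA} {B : ctbDistrLatticeType dB}.

Definition bool_hom (f : A -> B) : Prop :=
  [/\ f \bot%O = \bot%O, f \top%O = \top%O,
      (forall x y, f (Order.join x y) = Order.join (f x) (f y)),
      (forall x y, f (Order.meet x y) = Order.meet (f x) (f y))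
    & (forall x, f (Order.compl x) = Order.compl (f x))].
End BoolAlg.

Section Sup.
Context {d : Order.disp_t} {B : ctbDistrLatticeType d}.

Definition is_lub (s : nat -> B) (b : B) : Prop :=
  (forall n, (s n <= b)%O) /\ (forall c, (forall n, (s n <= c)%O) -> (b <= c)%O).

Definition is_glb (s : nat -> B) (b : B) : Prop :=
  (forall n, (b <= s n)%O) /\ (forall c, (forall n, (c <= s n)%O) -> (c <= b)%O).

Definition sigma_complete : Prop :=
  forall s : nat -> B, (exists b, is_lub s b) /\ (exists b, is_glb s b).
End Sup.
Arguments sigma_complete {d} B.

Section Stone.
Context {d : Order.disp_t} (A : ctbDistrLatticeType d).

Definition ultrafilter (U : set A) : Prop :=
  [/\ ~ U \bot%O, U \top%O,
      (forall x y, U x -> (x <= y)%O -> U y),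
      (forall x y, U x -> U y -> U (Order.meet x y))
    & (forall x, U x \/ U (Order.compl x))].

Definition stone : Type := {U : set A | ultrafilter U}.

(** Basic clopen set of [a], i.e. the image of [a] under A -> A^infty. *)
Definition clopen (a : A) : set stone := fun U => proj1_sig U a.

Definition stone_open (O : set stone) : Prop :=
  forall U, O U -> exists a : A, clopen a U /\ (forall V, clopen a V -> O V).

Definition stone_continuous (f : stone -> R) : Prop :=
  forall V : set R, open V -> stone_open (f @^-1` V).

Definition baire (X : set stone) : Prop :=
  forall S : set (set stone),
    sigma_algebra setT S ->
    (forall f, stone_continuous f ->
       forall W : set R, @measurable _ (measurableTypeR R) W -> S (f @^-1` W)) ->
    S X.

(** Least upper bound of a sequence in A^infty = Baire(Stone A),
    ordered by inclusion. *)
Definition baire_lub (X : nat -> set stone) (Y : set stone) : Prop :=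
  baire Y /\ (forall n, X n `<=` Y) /\
  (forall Z, baire Z -> (forall n, X n `<=` Z) -> Y `<=` Z).

(** sigma-homomorphism A^infty -> B, with A^infty represented by the Baire
    sets; only the values on Baire sets matter. *)
Definition baire_sigma_hom {dB : Order.disp_t} {B : ctbDistrLatticeType dB}
  (Phi : set stone -> B) : Prop :=
  [/\ Phi set0 = \bot%O /\ Phi setT = \top%O,
      (forall X Y, baire X -> baire Y ->
         Phi (setU X Y) = Order.join (Phi X) (Phi Y)),
      (forall X Y, baire X -> baire Y ->
         Phi (setI X Y) = Order.meet (Phi X) (Phi Y)),
      (forall X, baire X -> Phi (setC X) = Order.compl (Phi X))
    & (forall (X : nat -> set stone) Y, (forall n, baire (X n)) ->
         baire_lub X Y -> is_lub (fun n => Phi (X n)) (Phi Y))].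
End Stone.

(* Main.v *)
Require Import Defs.
Require Import Defs.
From HB Require Import structures.
From mathcomp Require Import all_boot all_order all_algebra.
From mathcomp Require Import all_classical all_reals all_analysis.
From mathcomp Require Import Rstruct Rstruct_topology.
From Stdlib Require Import Reals.
Require Import Defs.
Set Implicit Arguments. Unset Strict Implicit. Unset Printing Implicit Defensive.
Import Order.Theory GRing.Theory Num.Theory.
Local Open Scope classical_set_scope.
Local Open Scope order_scope.
Notation cpl := Order.compl.
Section Lat.
Context {d : Order.disp_t} {L : ctbDistrLatticeType d}.
Implicit Types x y z : L.
Lemma le_meetC x y : (x <= y) <-> (x `&` cpl y = \bot).
Proof.
split.
  by move=> xy; apply/eqP; rewrite -lex0; apply: le_trans (leI2 xy (lexx _)) _; rewrite meetxC.
move=> h; have -> : x = x `&` (y `|` cpl y) by rewrite joinxC meetx1.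
by rewrite meetUr h joinx0 leIr.
Qed.
Lemma le_Cmeet x y : (x <= cpl y) <-> (x `&` y = \bot).
Proof. by rewrite le_meetC complK. Qed.
End Lat.
Section UF.
Context {d : Order.disp_t} {L : ctbDistrLatticeType d}.
Implicit Types x y z : L.
Implicit Types U : stone L.
Lemma uf_up U x y : proj1_sig U x -> x <= y -> proj1_sig U y.
Proof. by case: U => ? [] /= ? ? H ? ?; apply: H. Qed.
Lemma uf_meet U x y : proj1_sig U x -> proj1_sig U y -> proj1_sig U (x `&` y).
Proof. by case: U => ? [] /= ? ? ? H ?; apply: H. Qed.
Lemma uf_top U : proj1_sig U \top. Proof. by case: U => ? []. Qed.
Lemma uf_nbot U : ~ proj1_sig U \bot. Proof. by case: U => ? []. Qed.
Lemma uf_cpl U x : proj1_sig U x \/ proj1_sig U (cpl x). Proof. by case: U => ? [] ? ? ? ? H; apply: H. Qed.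
Lemma uf_notboth U x : proj1_sig U x -> proj1_sig U (cpl x) -> False.
Proof. by move=> h1 h2; apply: (@uf_nbot U); rewrite -(meetxC x); apply: uf_meet. Qed.
Lemma clopen_cpl x U : clopen (cpl x) U <-> ~ clopen x U.
Proof.
rewrite /clopen; split; first by move=> h1 h2; apply: uf_notboth h2 h1.
by case: (uf_cpl U x).
Qed.
Lemma clopen_le x y : x <= y -> clopen x `<=` clopen y.
Proof. by move=> xy U Ux; apply: uf_up xy. Qed.
Lemma clopen_join x y U : clopen (x `|` y) U <-> clopen x U \/ clopen y U.
Proof.
split; last by case=> h; [apply: clopen_le h; rewrite leUl|apply: clopen_le h; rewrite leUr].
move=> h; case: (uf_cpl U x) => hx; first by left.
case: (uf_cpl U y) => hy; first by right.
exfalso; apply: (uf_notboth h); rewrite complU; exact: uf_meet.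
Qed.
Lemma clopen_bot U : ~ clopen \bot U. Proof. exact: uf_nbot. Qed.
Lemma clopen_top U : clopen \top U. Proof. exact: uf_top. Qed.
End UF.
Section UFL.
Context {d : Order.disp_t} {L : ctbDistrLatticeType d}.
Implicit Types x y z : L.
Definition pfilter (F : set L) :=
  [/\ (forall x y, F x -> x <= y -> F y), (forall x y, F x -> F y -> F (x `&` y))
    & ~ F \bot].
Lemma uf_lemma (F : set L) : pfilter F -> F \top ->
  exists U : stone L, F `<=` proj1_sig U.
Proof.
move=> pF Ftop; case: (pF) => Fup Fmeet Fbot.
pose P (G : set L) := pfilter G /\ ((exists x, G x) -> F `<=` G).
have [A [PA Amax]] : exists A, P A /\ forall B, A `<` B -> ~ P B.
  apply: Zorn_bigcup => C CP Ctot; split; last first.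
    by move=> [x [X CX Xx]]; move=> y Fy; exists X => //; apply: (CP X CX).2 => //; exists x.
  split.
  - by move=> x y [X CX Xx] xy; exists X => //; case: (CP X CX) => -[H _ _] _; apply: H xy.
  - move=> x y [X CX Xx] [Y CY Yy].
    case: (Ctot X Y CX CY) => [XY|YX].
      by exists Y => //; case: (CP Y CY) => -[_ H _] _; apply: H => //; apply: XY.
    by exists X => //; case: (CP X CX) => -[_ H _] _; apply: H => //; apply: YX.
  - by move=> [X CX Xb]; case: (CP X CX) => -[_ _ H] _; apply: H.
move: PA Amax; rewrite /P => -[[Aup Ameet Abot] AF] Amax.
have Ane : exists x, A x.
  apply: contrapT => Ae; apply: (Amax F); last first.
    by split => // _ ; exact: subset_refl.
  split; first by move=> x Ax; exfalso; apply: Ae; exists x.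
  by move=> FA; apply: Ae; exists \top; apply: FA.
have AF' := AF Ane.
have Atop : A \top by case: Ane => x Ax; apply: Aup Ax (lex1 _).
have uA : ultrafilter A.
  split => //; move=> x.
  have [Ax|nAx] := pselect (A x); first by left.
  right.
  pose G := [set y | exists a, A a /\ a `&` x <= y].
  have [Gb|nGb] := pselect (G \bot).
    case: Gb => a [Aa]; rewrite lex0 => /eqP h.
    by apply: Aup Aa _; apply/le_Cmeet.
  exfalso; apply: (Amax G).
    split; first by move=> y Ay; exists y; split => //; exact: leIl.
    by move=> GA; apply: nAx; apply: GA; exists \top; split => //; rewrite meet1x.
  split; last by move=> _ y Fy; exists y; split; [exact: AF'|exact: leIl].
  rewrite /pfilter; split => //.
  - by move=> y z [a [Aa ay]] yz; exists a; split => //; apply: le_trans yz.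
  - move=> y z [a [Aa ay]] [b [Ab bz]]; exists (a `&` b); split; first exact: Ameet.
    rewrite lexI; apply/andP; split.
      by apply: le_trans ay; apply: leI2 (lexx _); exact: leIl.
    by apply: le_trans bz; apply: leI2 (lexx _); exact: leIr.
by exists (exist _ A uA).
Qed.
End UFL.
Section Sep.
Context {d : Order.disp_t} {A : ctbDistrLatticeType d}.
Implicit Types x y z : A.
Lemma stone_sep (K O : set (stone A)) : stone_open (setC K) -> stone_open O ->
  K `<=` O -> exists a, K `<=` clopen a /\ clopen a `<=` O.
Proof.
move=> oK oO KO.
pose I := [set a | clopen a `<=` O].
pose J := [set c | clopen c `<=` setC K].
have [[a [c [Ia [Jc ac]]]]|nac] :=
  pselect (exists a c, I a /\ J c /\ a `|` c = \top).
  exists a; split => // U KU.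
  have : clopen (a `|` c) U by rewrite ac; exact: clopen_top.
  by case/clopen_join => // /Jc.
pose F := [set x | exists a c, I a /\ J c /\ cpl a `&` cpl c <= x].
have I0 : I \bot by move=> U /clopen_bot.
have J0 : J \bot by move=> U /clopen_bot.
have pF : pfilter F.
  split.
  - by move=> x y [a [c [Ia [Jc h]]]] xy; exists a, c; split => //; split => //; apply: le_trans xy.
  - move=> x y [a [c [Ia [Jc h]]]] [a' [c' [Ia' [Jc' h']]]].
    exists (a `|` a'), (c `|` c'); split.
      by move=> U /clopen_join [/Ia|/Ia'].
    split; first by move=> U /clopen_join [/Jc|/Jc'].
    rewrite !complU lexI; apply/andP; split.
      apply: le_trans h; apply: leI2; exact: leIl.
    apply: le_trans h'; apply: leI2; exact: leIr.
  - move=> [a [c [Ia [Jc h]]]]; apply: nac; exists a, c; split => //; split => //.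
    move: h; rewrite lex0 -complU => /eqP h.
    by rewrite -[a `|` c]complK h compl0.
have [U FU] := uf_lemma pF (ltac:(exists \bot, \bot; split => //; split => //; exact: lex1)).
have [KU|nKU] := pselect (K U).
  have [a [Ua aO]] := oO U (KO U KU).
  have Fa : F (cpl a) by exists a, \bot; split => //; split => //; exact: leIl.
  exfalso; exact: (@uf_notboth _ _ U a Ua (FU _ Fa)).
have [c [Uc cK]] := oK U nKU.
have Fc : F (cpl c) by exists \bot, c; split => //; split => //; exact: leIr.
exfalso; exact: (@uf_notboth _ _ U c Uc (FU _ Fc)).
Qed.
End Sep.
Section SA.
Context {T : Type} (S : set (set T)) (sS : sigma_algebra setT S).
Lemma sa0 : S set0. Proof. by case: sS. Qed.
Lemma saC X : S X -> S (setC X). Proof. by case: sS => _ h _ SX; rewrite -setTD; apply: h. Qed.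
Lemma saB (X : nat -> set T) : (forall n, S (X n)) -> S (\bigcup_n X n).
Proof. by case: sS => _ _ h; apply: h. Qed.
Lemma saU X Y : S X -> S Y -> S (setU X Y).
Proof. move=> SX SY; rewrite -bigcup2E; apply: saB => -[|[|n]] //=; exact: sa0. Qed.
Lemma saI X Y : S X -> S Y -> S (setI X Y).
Proof. by move=> SX SY; rewrite -(setCK (setI X Y)) setCI; apply: saC; apply: saU; apply: saC. Qed.
End SA.

Section BaireA.
Local Open Scope ring_scope.
Context {d : Order.disp_t} {A : ctbDistrLatticeType d}.
Implicit Types x y z : A.

Lemma cont_gt (f : stone A -> R) (S : set (set (stone A))) :
  sigma_algebra setT S -> (forall a, S (clopen a)) -> stone_continuous f ->
  forall r : R, S [set U | (r < f U)].
Proof.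
move=> sS Sc cf r.
pose K (n : nat) := [set U | (r + (n.+1%:R)^-1 <= f U)].
have Kc n : stone_open (setC (K n)).
  have -> : setC (K n) = f @^-1` [set x | (x < r + (n.+1%:R)^-1)].
    apply/seteqP; split => U /=; rewrite /K /=.
      move=> h; rewrite real_ltNge ?num_real //; exact/negP.
    by rewrite real_ltNge ?num_real // => /negP.
  apply: cf; exact: open_lt.
have Oo : stone_open [set U | (r < f U)] by exact: (cf _ (@open_gt _ r)).
have KO n : K n `<=` [set U | (r < f U)].
  move=> U; rewrite /K /= => h; apply: lt_le_trans h.
  by rewrite ltrDl invr_gt0 ltr0n.
have [c hc] := choice (fun n => stone_sep (Kc n) Oo (KO n)).
have -> : [set U | (r < f U)] = \bigcup_n clopen (c n).
  apply/seteqP; split => U /=; last by move=> [n _ h]; exact: (hc n).2.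
  move=> h; pose e := (f U - r).
  have e0 : (0 < e) by rewrite subr_gt0.
  pose n := Num.bound (e^-1).
  exists n => //; apply: (hc n).1; rewrite /K /=.
  rewrite -lerBrDl -/e; apply: ltW.
  rewrite invf_plt ?posrE ?ltr0n //.
  apply: lt_le_trans (archi_boundP _) _; first by rewrite invr_ge0 ltW.
  by rewrite ler_nat.
by apply: saB => // n.
Qed.

Lemma baire_min X : baire X -> forall S, sigma_algebra setT S ->
  (forall a : A, S (clopen a)) -> S X.
Proof.
move=> bX S sS Sc; apply: bX => // f cf W mW.
pose TT := [set W : set R | S (f @^-1` W)].
have sT : sigma_algebra setT TT.
  split.
  - by rewrite /TT /= preimage_set0; exact: sa0.
  - by move=> W' TW'; rewrite /TT /= setTD -preimage_setC; apply: saC.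
  - by move=> F TF; rewrite /TT /= preimage_bigcup; apply: saB.
suff : <<s setT, R.-ocitv.-measurable >> `<=` TT by apply.
apply: smallest_sub => // _ [[a b] _ <-].
rewrite /TT /=.
have -> : f @^-1` `]a, b]%classic = setI [set U | (a < f U)] (setC [set U | (b < f U)]).
  apply/seteqP; split => U /=; rewrite in_itv /=.
    by move/andP => [h1 h2]; split => //; apply/negP; rewrite -real_leNgt ?num_real.
  by move=> [h1 /negP h2]; apply/andP; split => //; rewrite real_leNgt ?num_real.
by apply: saI => //; [|apply: saC] => //; apply: cont_gt.
Qed.

Lemma baire_sigma : sigma_algebra setT (@baire d A).
Proof.
split.
- by move=> S sS _; exact: sa0.
- by move=> X bX S sS h; rewrite setTD; apply: saC => //; apply: bX.
- by move=> X bX S sS h; apply: saB => // n; apply: bX.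
Qed.

Lemma baire_clopen (a : A) : baire (clopen a).
Proof.
move=> S sS h.
pose f (U : stone A) : R := if `[< clopen a U >] then (1:R) else (0:R).
have -> : clopen a = f @^-1` [set (1:R)].
  apply/seteqP; split => U /=; rewrite /f.
    by move=> Ua; rewrite asboolT.
  case: asboolP => // _ /esym /eqP; rewrite oner_eq0.
  done.
apply: h; last exact: measurable_set1.
move=> V _ U VU.
have [Ua|nUa] := pselect (clopen a U).
  exists a; split => // W Wa; rewrite /preimage /= /f asboolT //.
  by move: VU; rewrite /preimage /= /f asboolT.
have Uc : clopen (cpl a) U by apply/clopen_cpl.
exists (cpl a); split => // W /clopen_cpl Wa; rewrite /preimage /= /f asboolF //.
by move: VU; rewrite /preimage /= /f asboolF.
Qed.
End BaireA.
Section Ext.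
Context {dA dB : Order.disp_t} {A : ctbDistrLatticeType dA} {B : ctbDistrLatticeType dB}.
Variables (phi : A -> B) (Hphi : bool_hom phi) (HB : sigma_complete B).

Lemma phi_le x y : x <= y -> phi x <= phi y.
Proof.
case: Hphi => _ _ _ hm _.
by rewrite !leEmeet => /eqP h; rewrite -hm h.
Qed.

Lemma psi_uf (V : stone B) : ultrafilter [set a : A | proj1_sig V (phi a)].
Proof.
case: Hphi => h0 h1 _ hm hc; split => /=.
- by rewrite h0; exact: uf_nbot.
- by rewrite h1; exact: uf_top.
- by move=> x y Vx xy; apply: uf_up Vx _; exact: phi_le.
- by move=> x y Vx Vy; rewrite hm; exact: uf_meet.
- by move=> x; rewrite hc; exact: uf_cpl.
Qed.

Definition psi (V : stone B) : stone A := exist _ _ (psi_uf V).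
Definition pre (X : set (stone A)) : set (stone B) := [set V | X (psi V)].

Definition nwd (N : set (stone B)) := forall c : B, c <> \bot ->
  exists c', [/\ c' <> \bot, c' <= c & forall V, clopen c' V -> ~ N V].
Definition meager (M : set (stone B)) := exists N : nat -> set (stone B),
  (forall k, nwd (N k)) /\ M `<=` \bigcup_k N k.

Lemma meager_sub M M' : M' `<=` M -> meager M -> meager M'.
Proof. by move=> sub [N [nN MN]]; exists N; split => // V /sub /MN. Qed.

Lemma nwd0 : nwd set0.
Proof. by move=> c c0; exists c; split; [exact: c0|exact: lexx|move=> V _ []]. Qed.

Lemma meager_nwd N : nwd N -> meager N.
Proof. by move=> nN; exists (fun _ => N); split => // V NV; exists 0%N. Qed.

Lemma meager0 : meager set0. Proof. exact: meager_nwd nwd0. Qed.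

Lemma meager_bigcup (M : nat -> set (stone B)) :
  (forall n, meager (M n)) -> meager (\bigcup_n M n).
Proof.
move=> hM; have [Nf hN] := choice hM.
exists (fun m => if (unpickle m : option (nat * nat)) is Some (n, k) then Nf n k else set0).
split.
  move=> m; case: (unpickle m) => [[n k]|]; last exact: nwd0.
  exact: (hN n).1.
move=> V [n _ MnV]; have [k _ h] := (hN n).2 V MnV.
by exists (pickle (n, k)) => //; rewrite pickleK.
Qed.

Lemma meagerU M M' : meager M -> meager M' -> meager (setU M M').
Proof.
move=> h h'; rewrite -bigcup2E; apply: meager_bigcup => -[|[|n]] //=.
exact: meager0.
Qed.

Lemma clopen_meetP (x y : B) V : clopen (x `&` y) V -> clopen x V /\ clopen y V.
Proof. by move=> h; split; apply: clopen_le h; [exact: leIl|exact: leIr]. Qed.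

Lemma baire_cat (c : B) : meager (clopen c) -> c = \bot.
Proof.
move=> [N [nN cN]]; apply: contrapT => c0.
have [g hg] := choice (fun (p : nat * B) =>
  (ltac:(have [->|p0] := pselect (p.2 = \bot); [by exists \bot|]; 
         have [c' hc'] := nN p.1 p.2 p0; by exists c')) :
  exists y : B, p.2 <> \bot -> [/\ y <> \bot, y <= p.2 & forall V, clopen y V -> ~ N p.1 V]).
pose s := fix s k := if k is k'.+1 then g (k', s k') else c.
have hs : forall k, s k <> \bot.
  by elim => [|k IH] //=; case: (hg (k, s k) IH).
have sle : forall j i, s (i + j)%N <= s i.
  elim => [i|j IH i]; first by rewrite addn0.
  rewrite addnS /=; apply: le_trans (IH i).
  by case: (hg (i + j, s (i + j))%N (hs _)).
pose F := [set x | exists k, s k <= x].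
have pF : pfilter F.
  split.
  - by move=> x y [k h] xy; exists k; apply: le_trans xy.
  - move=> x y [k h] [k' h']; exists (k + k')%N; rewrite lexI; apply/andP; split.
      by apply: le_trans h; apply: sle.
    by apply: le_trans h'; rewrite addnC; apply: sle.
  - by move=> [k]; rewrite lex0 => /eqP; apply: hs.
have [U FU] := uf_lemma pF (ltac:(exists 0%N; exact: lex1)).
have Uc : clopen c U by apply: (FU c); exists 0%N.
have [k _ NkU] := cN U Uc.
have Usk : clopen (s k.+1) U by apply: (FU); exists k.+1.
by case: (hg (k, s k) (hs k)) => _ _ /(_ U Usk).
Qed.

Definition rel (X : set (stone A)) (b : B) :=
  meager (setD (pre X) (clopen b)) /\ meager (setD (clopen b) (pre X)).

Lemma rel_exact X b : (forall V, pre X V <-> clopen b V) -> rel X b.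
Proof.
move=> h; split; apply: meager_sub meager0 => V [].
  by move=> /h.
by move=> /h.
Qed.

Lemma rel_le X b b' : rel X b -> rel X b' -> b <= b'.
Proof.
move=> [_ h1] [h2 _]; apply/le_meetC; apply: baire_cat.
apply: meager_sub (meagerU h1 h2) => V /clopen_meetP [Vb /clopen_cpl Vb'].
have [P|nP] := pselect (pre X V); [right|left] => //.
Qed.

Lemma rel_uniq X b b' : rel X b -> rel X b' -> b = b'.
Proof. by move=> h h'; apply: le_anti; apply/andP; split; [exact: rel_le h h'|exact: rel_le h' h]. Qed.

Lemma rel_cpl X b : rel X b -> rel (setC X) (cpl b).
Proof.
move=> [h1 h2]; split.
  apply: meager_sub h2 => V [nX /clopen_cpl nb]; split => //.
  exact: contrapT.
apply: meager_sub h1 => V [/clopen_cpl nb nnX]; split => //.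
exact: contrapT.
Qed.

Lemma rel_lub (X : nat -> set (stone A)) (b : nat -> B) s :
  (forall n, rel (X n) (b n)) -> is_lub b s -> rel (\bigcup_n X n) s.
Proof.
move=> hr [ub lub]; split.
  apply: meager_sub (meager_bigcup (fun n => (hr n).1)) => V [[n _ XnV] ns].
  by exists n => //; split => // /(clopen_le (ub n)).
pose N := setD (clopen s) (\bigcup_n clopen (b n)).
have nN : nwd N.
  move=> c c0.
  have [cs|cs] := pselect (c `&` cpl s = \bot); last first.
    exists (c `&` cpl s); split => //; first exact: leIl.
    by move=> V /clopen_meetP [_ /clopen_cpl ns] [].
  have [[n cn]|ncn] := pselect (exists n, c `&` b n <> \bot).
    exists (c `&` b n); split => //; first exact: leIl.
    by move=> V /clopen_meetP [_ Vb] [_]; apply; exists n.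
  exfalso; apply: c0.
  have h n : b n <= cpl c.
    apply/le_Cmeet; rewrite meetC; apply: contrapT => h; apply: ncn; by exists n.
  have : c <= cpl c by apply: le_trans (lub _ h); apply/le_meetC.
  by move/meet_idPl; rewrite meetxC => <-.
apply: meager_sub (meagerU (meager_bigcup (fun n => (hr n).2)) (meager_nwd nN)).
move=> V [Vs nX].
have [[n _ Vbn]|nb] := pselect ((\bigcup_n clopen (b n)) V).
  by left; exists n => //; split => // XV; apply: nX; exists n.
by right.
Qed.

Lemma rel_U X Y b b' : rel X b -> rel Y b' -> rel (setU X Y) (b `|` b').
Proof.
move=> h h'; rewrite -bigcup2E.
apply: (rel_lub (b := fun n => if n == 0%N then b else if n == 1%N then b' else \bot)).
  case=> [|[|n]] //=; apply: rel_exact => V; split => //.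
  by move/clopen_bot.
split.
  by case=> [|[|n]] /=; [exact: leUl|exact: leUr|exact: le0x].
by move=> c h0; rewrite leUx (h0 0%N) (h0 1%N).
Qed.

Lemma good_sigma : sigma_algebra setT [set X | exists b, rel X b].
Proof.
split.
- exists \bot; apply: rel_exact => V; split => //; by move/clopen_bot.
- by move=> X [b h]; rewrite setTD; exists (cpl b); exact: rel_cpl.
- move=> X hX; have [b hb] := choice hX.
  have [[s hs] _] := HB b.
  by exists s; exact: rel_lub hs.
Qed.

Lemma rel_clopen a : rel (clopen a) (phi a).
Proof. by apply: rel_exact. Qed.

Lemma baire_rel X : baire X -> exists b, rel X b.
Proof.
move=> bX; apply: (baire_min bX good_sigma) => a.
by exists (phi a); exact: rel_clopen.
Qed.

Definition Phi (X : set (stone A)) : B :=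
  match pselect (exists b, rel X b) with
  | left h => proj1_sig (cid h)
  | right _ => \bot
  end.

Lemma PhiE X b : rel X b -> Phi X = b.
Proof.
move=> hb; rewrite /Phi; case: pselect => [h|nh].
  exact: rel_uniq (proj2_sig (cid h)) hb.
by exfalso; apply: nh; exists b.
Qed.

Lemma Phi_rel X : baire X -> rel X (Phi X).
Proof. by move=> /baire_rel [b hb]; rewrite (PhiE hb). Qed.

Lemma rel_set0 : rel set0 \bot.
Proof. by apply: rel_exact => V; split => // /clopen_bot. Qed.

Lemma rel_setT : rel setT \top.
Proof. by apply: rel_exact => V; split => // _; exact: clopen_top. Qed.

Lemma baire_lub_bigcup (X : nat -> set (stone A)) :
  (forall n, baire (X n)) -> baire_lub X (\bigcup_n X n).
Proof.
move=> bX; split; first exact: (saB (@baire_sigma _ A) bX).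
split; first by move=> n V XV; exists n.
by move=> Z _ h V [n _ XV]; apply: h XV.
Qed.

Lemma baire_lubE (X : nat -> set (stone A)) Y :
  (forall n, baire (X n)) -> baire_lub X Y -> Y = \bigcup_n X n.
Proof.
move=> bX [bY [ub lub]]; apply/seteqP; split.
  by apply: lub; [exact: (saB (@baire_sigma _ A) bX)|move=> n V XV; exists n].
by move=> V [n _ XV]; apply: ub XV.
Qed.

Lemma is_lub_uniq (s : nat -> B) b b' : is_lub s b -> is_lub s b' -> b = b'.
Proof.
move=> [u l] [u' l']; apply: le_anti; apply/andP; split; [exact: l|exact: l'].
Qed.

Lemma Phi_hom : baire_sigma_hom Phi.
Proof.
split.
- by split; apply: PhiE; [exact: rel_set0|exact: rel_setT].
- by move=> X Y bX bY; apply: PhiE; apply: rel_U; exact: Phi_rel.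
- move=> X Y bX bY; apply: PhiE.
  have -> : setI X Y = setC (setU (setC X) (setC Y)) by rewrite -setCI setCK.
  have -> : Phi X `&` Phi Y = cpl (cpl (Phi X) `|` cpl (Phi Y)) by rewrite complU !complK.
  by apply: rel_cpl; apply: rel_U; apply: rel_cpl; exact: Phi_rel.
- by move=> X bX; apply: PhiE; apply: rel_cpl; exact: Phi_rel.
- move=> X Y bX hY; rewrite (baire_lubE bX hY).
  have [[s hs] _] := HB (fun n => Phi (X n)).
  by rewrite (PhiE (rel_lub (fun n => Phi_rel (bX n)) hs)).
Qed.

End Ext.

Theorem proposition2p22 (dA dB : Order.disp_t)
  (A : ctbDistrLatticeType dA) (B : ctbDistrLatticeType dB)
  (HB : sigma_complete B) (phi : A -> B) (Hphi : bool_hom phi) :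
  exists Phi : set (stone A) -> B,
    [/\ baire_sigma_hom Phi,
        (forall a : A, Phi (clopen a) = phi a)
      & (forall Psi : set (stone A) -> B,
           baire_sigma_hom Psi -> (forall a : A, Psi (clopen a) = phi a) ->
           forall X, baire X -> Psi X = Phi X)].
Proof.
exists (Phi Hphi); split.
- exact: Phi_hom.
- by move=> a; exact: (PhiE (rel_clopen Hphi a)).
move=> Psi hPsi hc X bX.
have [[P0 PT] PU PI PC PL] := hPsi.
have [[Q0 QT] QU QI QC QL] := Phi_hom Hphi HB.
pose S := [set X : set (stone A) | baire X /\ Psi X = Phi Hphi X].
suff : S X by case.
apply: (baire_min bX).
  split.
  - by split; [exact: (sa0 baire_sigma)|rewrite P0 Q0].
  - move=> Y [bY e]; rewrite setTD; split; first exact: (saC baire_sigma).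
    by rewrite PC // QC // e.
  - move=> Y hY; have bY n := (hY n).1.
    split; first exact: (saB baire_sigma bY).
    have hl := baire_lub_bigcup bY.
    have E : (fun n => Psi (Y n)) = (fun n => Phi Hphi (Y n)).
      by apply: funext => n; exact: (hY n).2.
    apply: is_lub_uniq (PL _ _ bY hl) _.
    by rewrite E; exact: QL.
move=> a; split; first exact: baire_clopen.
by rewrite hc (PhiE (rel_clopen Hphi a)).
Qed.
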